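(* Under the standing setup (in either Scenario I or Scenario II), assume $0<h<\frac{1}{d_{\max}}$ and that the expected graph is strongly connected. Then: (i) For the discrete-time system $x(t_{k+1})=(I-hL_{\sigma_k})^{\bar k}x(t_k)$, for every $x(0)\in\mathbb{R}^n$, $\lim_{k\to\infty}\mathbb{E}[x(t_k)]=\mathbf{1}\bar\pi_1^T x(0)$, where $W_1=\mathbb{E}[(I-hL_{\sigma_k})^{\bar k}]=\sum_{i=1}^4 p_i (I-hL_i)^{\bar k}$ satisfies $\lim_{k\to\infty}W_1^k=\mathbf{1}\bar\pi_1^T$, and $\bar\pi_1>0$ (entrywise) is a left eigenvector of $W_1$ for eigenvalue $1$ with $\bar\pi_1^T\mathbf{1}=1$. (ii) For the limiting ($h\to0$) system $x(t_{k+1})=e^{-L_{\sigma_k}\Delta}x(t_k)$, for every $x(0)\in\mathbb{R}^n$, $\lim_{k\to\infty}\mathbb{E}[x(t_k)]=\mathbf{1}\bar\pi_2^T x(0)$, where $W_2=\mathbb{E}[e^{-L_{\sigma_k}\Delta}]=\sum_{i=1}^4 p_i e^{-L_i\Delta}$ satisfies $\lim_{k\to\infty}W_2^k=\mathbf{1}\bar\pi_2^T$, and $\bar\pi_2>0$ is a left eigenvector of $W_2$ for eigenvalue $1$ with $\bar\pi_2^T\mathbf{1}=1$. In particular both systems reach consensus in mean.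
   Context: Standing setup. $n\ge3$ agents. $G$ is an undirected connected graph on $\{1,\dots,n\}$ with symmetric $0/1$ adjacency matrix $A=[a_{ij}]$ (zero diagonal), degrees $d_i=\sum_j a_{ij}$, $d_{\max}=\max_i d_i$, and Laplacian $L=\mathrm{diag}(d_1,\dots,d_n)-A$, with entries $l_{ij}$. For a (possibly directed) $0/1$ adjacency matrix $B$ ($b_{ij}=1$ meaning agent $i$ receives from agent $j$), its Laplacian is $\mathrm{diag}(B\mathbf{1})-B$. Scenario I (agents 1,2 may fail to receive): $A_1$ is $A$ with row 1 set to zero, $A_2$ is $A$ with row 2 set to zero, $A_3$ is $A$ with rows 1 and 2 set to zero, $A_4=A$. Scenario II (agents 1,2 may fail to send): same with columns instead of rows. $L_i$ is the Laplacian of $A_i$ (so $L_4=L$). Probabilities $p_1=\alpha,p_2=\beta,p_3=\gamma,p_4=\theta\in(0,1)$ with $\alpha+\beta+\gamma+\theta=1$. The expected graph is the directed graph with weighted adjacency matrix $\sum_{i=1}^4 p_iA_i$. Sampling period $h>0$, integer $\bar k\ge1$, $\Delta=\bar k h$, $t_k=k\Delta$. $\sigma_0,\sigma_1,\dots$ are i.i.d. random variables in $\{1,2,3,4\}$ with $P(\sigma_k=i)=p_i$ (the graph is held fixed on each interval of length $\Delta$, during which the delta-operator system $\delta x=-L_{\sigma_k}x$ with step $h$ is run $\bar k$ times). The initial state $x(t_0)=x(0)\in\mathbb{R}^n$ is deterministic. $\mathbf{1}$ is the all-ones column vector. *)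

(* Defs.v *)
(* Matrices are represented as functions nat -> nat -> R, vectors as
   nat -> R; only indices 0..n-1 are meaningful.  Agent k (1-based in the
   paper) is index k-1 here, so agents 1,2 are indices 0,1. *)
From Stdlib Require Import Reals Lra List Arith.
Import ListNotations.
Open Scope R_scope.

Definition Vec := nat -> R.
Definition Mat := nat -> nat -> R.

Fixpoint rsum (n : nat) (f : nat -> R) : R :=
  match n with O => 0 | S m => rsum m f + f m end.

Fixpoint rmaxn (n : nat) (f : nat -> R) : R :=
  match n with O => 0 | S m => Rmax (rmaxn m f) (f m) end.

Definition mid : Mat := fun i j => if Nat.eqb i j then 1 else 0.
Definition madd (A B : Mat) : Mat := fun i j => A i j + B i j.
Definition mscal (c : R) (A : Mat) : Mat := fun i j => c * A i j.
Definition mmul (n : nat) (A B : Mat) : Mat :=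
  fun i j => rsum n (fun k => A i k * B k j).
Definition mvec (n : nat) (A : Mat) (x : Vec) : Vec :=
  fun i => rsum n (fun k => A i k * x k).
Fixpoint mpow (n : nat) (A : Mat) (k : nat) : Mat :=
  match k with O => mid | S k' => mmul n A (mpow n A k') end.

Definition aR (a : nat -> nat -> bool) : Mat :=
  fun i j => if a i j then 1 else 0.

Definition deg (n : nat) (a : nat -> nat -> bool) (i : nat) : R :=
  rsum n (aR a i).
Definition dmax (n : nat) (a : nat -> nat -> bool) : R :=
  rmaxn n (deg n a).

Definition lap (n : nat) (B : Mat) : Mat :=
  fun i j => (if Nat.eqb i j then rsum n (B i) else 0) - B i j.

Definition sym_irrefl (n : nat) (a : nat -> nat -> bool) : Prop :=
  (forall i j, (i < n)%nat -> (j < n)%nat -> a i j = a j i) /\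
  (forall i, (i < n)%nat -> a i i = false).

Inductive reach (n : nat) (adj : nat -> nat -> Prop) (i : nat) : nat -> Prop :=
| reach_refl : (i < n)%nat -> reach n adj i i
| reach_step : forall j k, reach n adj i j -> adj j k -> (k < n)%nat ->
               reach n adj i k.

Definition strongly_connected (n : nat) (adj : nat -> nat -> Prop) : Prop :=
  forall i j, (i < n)%nat -> (j < n)%nat -> reach n adj i j.

Definition connected (n : nat) (a : nat -> nat -> bool) : Prop :=
  strongly_connected n (fun i j => a i j = true).

(* Failure pattern: index k is the failing agent under mode m
   (m = 1: agent 1; m = 2: agent 2; m = 3: agents 1 and 2; m = 4: none). *)
Definition fails (m k : nat) : bool :=
  match m with
  | 1%nat => Nat.eqb k 0
  | 2%nat => Nat.eqb k 1
  | 3%nat => Nat.leb k 1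
  | _ => false
  end.

(* Scenario I (scen = true): rows of failing agents zeroed (cannot receive).
   Scenario II (scen = false): columns zeroed (cannot send). *)
Definition Amode (scen : bool) (a : nat -> nat -> bool) (m : nat) : Mat :=
  fun i j =>
    if (if scen then fails m i else fails m j) then 0 else aR a i j.

Definition Lmode (n : nat) (scen : bool) (a : nat -> nat -> bool) (m : nat) : Mat :=
  lap n (Amode scen a m).

Definition prob (al be ga th : R) (m : nat) : R :=
  match m with
  | 1%nat => al | 2%nat => be | 3%nat => ga | _ => th
  end.

Definition modes : list nat := [1; 2; 3; 4]%nat.

Definition msum4 (f : nat -> Mat) : Mat :=
  fun i j => f 1%nat i j + f 2%nat i j + f 3%nat i j + f 4%nat i j.

Definition expected_adj (scen : bool) (a : nat -> nat -> bool) (al be ga th : R) : Mat :=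
  msum4 (fun m => mscal (prob al be ga th m) (Amode scen a m)).

Fixpoint seqs (k : nat) : list (list nat) :=
  match k with
  | O => [[]]
  | S k' => flat_map (fun m => map (cons m) (seqs k')) modes
  end.

Definition weight (p : nat -> R) (s : list nat) : R :=
  fold_right (fun m r => p m * r) 1 s.

Fixpoint traj (n : nat) (M : nat -> Mat) (s : list nat) (x : Vec) : Vec :=
  match s with
  | [] => x
  | m :: s' => traj n M s' (mvec n (M m) x)
  end.

(* E[x(t_k)] for x(t_{j+1}) = M_{sigma_j} x(t_j), sigma_j i.i.d. with law p,
   x(t_0) = x0 deterministic: the finite expectation over {1..4}^k. *)
Definition expect_state (n : nat) (M : nat -> Mat) (p : nat -> R) (k : nat)
  (x0 : Vec) : Vec :=
  fun i => fold_right Rplus 0 (map (fun s => weight p s * traj n M s x0 i) (seqs k)).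

Definition is_mexp (n : nat) (M E : Mat) : Prop :=
  forall i j, (i < n)%nat -> (j < n)%nat ->
    Un_cv (fun N => sum_f_R0 (fun k => mpow n M k i j / INR (fact k)) N) (E i j).

Definition consensus_in_mean (n : nat) (M : nat -> Mat) (p : nat -> R) : Prop :=
  let W := msum4 (fun m => mscal (p m) (M m)) in
  exists pi : Vec,
    (forall i, (i < n)%nat -> 0 < pi i) /\
    rsum n pi = 1 /\
    (forall j, (j < n)%nat -> rsum n (fun i => pi i * W i j) = pi j) /\
    (forall i j, (i < n)%nat -> (j < n)%nat ->
       Un_cv (fun k => mpow n W k i j) (pi j)) /\
    (forall x0 : Vec, forall i, (i < n)%nat ->
       Un_cv (fun k => expect_state n M p k x0 i) (rsum n (fun j => pi j * x0 j))).

(* Main.v *)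
Require Import Defs.
From Stdlib Require Import Reals Lra Lia List Arith.
From Stdlib Require Import FunctionalExtensionality IndefiniteDescription.
From Coquelicot Require Coquelicot.
Import ListNotations.
Open Scope R_scope.

Lemma rsum_ext n f g : (forall k, (k<n)%nat -> f k = g k) -> rsum n f = rsum n g.
Proof. induction n; simpl; intros H; [reflexivity|].
  rewrite IHn by (intros; apply H; lia). rewrite H by lia. reflexivity. Qed.

Lemma rsum_le n f g : (forall k, (k<n)%nat -> f k <= g k) -> rsum n f <= rsum n g.
Proof. induction n; simpl; intros H; [lra|].
  assert (f n <= g n) by (apply H; lia).
  assert (rsum n f <= rsum n g) by (apply IHn; intros; apply H; lia). lra. Qed.

Lemma rsum_plus n f g : rsum n (fun k => f k + g k) = rsum n f + rsum n g.
Proof. induction n; simpl; [lra|]. rewrite IHn; ring. Qed.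

Lemma rsum_minus n f g : rsum n (fun k => f k - g k) = rsum n f - rsum n g.
Proof. induction n; simpl; [lra|]. rewrite IHn; ring. Qed.

Lemma rsum_scal n c f : rsum n (fun k => c * f k) = c * rsum n f.
Proof. induction n; simpl; [ring|]. rewrite IHn; ring. Qed.

Lemma rsum_const0 n : rsum n (fun _ => 0) = 0.
Proof. induction n; simpl; [lra|]. rewrite IHn; ring. Qed.

Lemma rsum_nonneg n f : (forall k, (k<n)%nat -> 0 <= f k) -> 0 <= rsum n f.
Proof. intros H. rewrite <- (rsum_const0 n). apply rsum_le. exact H. Qed.

Lemma rsum_ge_term n f j : (forall k, (k<n)%nat -> 0 <= f k) -> (j<n)%nat -> f j <= rsum n f.
Proof. induction n; intros H Hj; [lia|]. simpl. destruct (Nat.eq_dec j n).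
  - subst. assert (0 <= rsum n f) by (apply rsum_nonneg; intros; apply H; lia). lra.
  - assert (f j <= rsum n f) by (apply IHn; [intros; apply H; lia| lia]).
    assert (0 <= f n) by (apply H; lia). lra. Qed.

Lemma mid_eq i : mid i i = 1.
Proof. unfold mid. rewrite Nat.eqb_refl. reflexivity. Qed.
Lemma mid_neq i j : i <> j -> mid i j = 0.
Proof. intros H. unfold mid. apply Nat.eqb_neq in H. rewrite H. reflexivity. Qed.

Lemma rsum_mid_l n i f : (i<n)%nat -> rsum n (fun k => mid i k * f k) = f i.
Proof. induction n; intros Hi; [lia|]. simpl. destruct (Nat.eq_dec i n).
  - subst. rewrite mid_eq. rewrite (rsum_ext _ _ (fun _ => 0)).
    + rewrite rsum_const0. ring.
    + intros k Hk. rewrite mid_neq by lia. ring.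
  - rewrite IHn by lia. rewrite mid_neq by lia. ring. Qed.

Lemma rsum_mid_r n j f : (j<n)%nat -> rsum n (fun k => f k * mid k j) = f j.
Proof. intros Hj. rewrite <- (rsum_mid_l n j f Hj). apply rsum_ext. intros k _.
  unfold mid. rewrite Nat.eqb_sym. ring. Qed.

Lemma rsum_swap n m f : rsum n (fun i => rsum m (fun j => f i j)) = rsum m (fun j => rsum n (fun i => f i j)).
Proof. induction n; simpl.
  - rewrite rsum_const0. reflexivity.
  - rewrite IHn. rewrite <- rsum_plus. reflexivity. Qed.

Fixpoint iterV (n : nat) (W : Mat) (k : nat) (x : Vec) : Vec :=
  match k with O => x | S k' => iterV n W k' (mvec n W x) end.

Lemma iterV_S n W k x : iterV n W (S k) x = mvec n W (iterV n W k x).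
Proof. revert x; induction k; intros x; [reflexivity|].
  change (iterV n W (S (S k)) x) with (iterV n W (S k) (mvec n W x)).
  rewrite IHk. reflexivity. Qed.

Lemma iterV_add n W a b x : iterV n W (a + b) x = iterV n W a (iterV n W b x).
Proof. induction a; [reflexivity|]. change (S a + b)%nat with (S (a + b)).
  rewrite !iterV_S, IHa. reflexivity. Qed.

Definition stoch n (W : Mat) := (forall i j, (i<n)%nat -> (j<n)%nat -> 0 <= W i j) /\
  (forall i, (i<n)%nat -> rsum n (W i) = 1).

Definition inb n a b (x : Vec) := forall i, (i<n)%nat -> a <= x i <= b.

Lemma mvec_inb n W a b x : stoch n W -> inb n a b x -> inb n a b (mvec n W x).
Proof. intros [Hn Hr] Hx i Hi. unfold mvec. split.
  - replace a with (rsum n (fun k => a * W i k)) by (rewrite rsum_scal, Hr by exact Hi; ring).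
    apply rsum_le. intros k Hk. specialize (Hx k Hk). specialize (Hn i k Hi Hk). nra.
  - replace b with (rsum n (fun k => b * W i k)) by (rewrite rsum_scal, Hr by exact Hi; ring).
    apply rsum_le. intros k Hk. specialize (Hx k Hk). specialize (Hn i k Hi Hk). nra.
Qed.

Lemma iterV_inb n W a b x k : stoch n W -> inb n a b x -> inb n a b (iterV n W k x).
Proof. intros HW Hx. induction k; [exact Hx|]. rewrite iterV_S. apply mvec_inb; auto. Qed.

Definition ej (j : nat) : Vec := fun i => mid i j.

Lemma ej_inb n j : inb n 0 1 (ej j).
Proof. intros i _. unfold ej, mid. destruct (Nat.eqb i j); lra. Qed.

Lemma iterV_lin n W k : forall x i, (i<n)%nat ->
  iterV n W k x i = rsum n (fun j => x j * iterV n W k (ej j) i).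
Proof. induction k; intros x i Hi.
  - simpl. unfold ej. rewrite <- (rsum_mid_l n i x Hi). apply rsum_ext. intros. unfold mid.
    rewrite Nat.eqb_sym. ring.
  - rewrite iterV_S. unfold mvec at 1.
    rewrite (rsum_ext _ _ (fun l => rsum n (fun j => W i l * (x j * iterV n W k (ej j) l)))).
    2:{ intros l Hl. rewrite IHk by exact Hl. rewrite <- rsum_scal. reflexivity. }
    rewrite rsum_swap. apply rsum_ext. intros j Hj. rewrite iterV_S. unfold mvec.
    rewrite <- rsum_scal. apply rsum_ext. intros. ring.
Qed.

Lemma mvec_ge_term n W x u v : stoch n W -> (forall k, (k<n)%nat -> 0 <= x k) ->
  (u<n)%nat -> (v<n)%nat -> W u v * x v <= mvec n W x u.
Proof. intros [Hn _] Hx Hu Hv. unfold mvec. apply (rsum_ge_term n (fun k => W u k * x k)); auto.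
  intros k Hk. specialize (Hx k Hk). specialize (Hn u k Hu Hk). nra. Qed.

Lemma reach_lt n adj l i : reach n adj l i -> (i < n)%nat.
Proof. induction 1; auto. Qed.
Lemma reach_lt0 n adj l i : reach n adj l i -> (l < n)%nat.
Proof. induction 1; auto. Qed.

Lemma reach_pos n W l i : stoch n W -> (forall i, (i<n)%nat -> 0 < W i i) ->
  reach n (fun i j => 0 < W j i) l i ->
  exists K, forall k, (K <= k)%nat -> 0 < iterV n W k (ej l) i.
Proof. intros HW Hd Hr.
  assert (Hnn : forall k j, (j<n)%nat -> 0 <= iterV n W k (ej l) j).
  { intros k j Hj. destruct (iterV_inb n W 0 1 (ej l) k HW (ej_inb n l) j Hj). lra. }
  induction Hr as [Hl | j k' Hr IH Hadj Hk'].
  - exists 0%nat. intros k _. induction k.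
    + simpl. unfold ej. rewrite mid_eq. lra.
    + rewrite iterV_S. eapply Rlt_le_trans; [|apply (mvec_ge_term n W _ l l); auto].
      apply Rmult_lt_0_compat; auto.
  - destruct IH as [K HK]. exists (S K). intros k Hkk. destruct k as [|k0]; [lia|].
    rewrite iterV_S. assert (Hj : (j < n)%nat) by (eapply reach_lt; eauto).
    eapply Rlt_le_trans; [|apply (mvec_ge_term n W _ k' j); auto].
    apply Rmult_lt_0_compat; auto. apply HK. lia.
Qed.

Lemma fin_K (P : nat -> nat -> Prop) N :
  (forall i, (i<N)%nat -> exists K, forall k, (K<=k)%nat -> P i k) ->
  exists K, forall i, (i<N)%nat -> forall k, (K<=k)%nat -> P i k.
Proof. induction N; intros H.
  - exists 0%nat. intros; lia.
  - destruct IHN as [K1 HK1]. { intros i Hi. apply H. lia. }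
    destruct (H N ltac:(lia)) as [K2 HK2]. exists (Nat.max K1 K2).
    intros i Hi k Hk. destruct (Nat.eq_dec i N).
    + subst. apply HK2. lia.
    + apply HK1; lia.
Qed.

Lemma fin_min (P : nat -> R -> Prop) N :
  (forall i d d', 0 < d' <= d -> P i d -> P i d') ->
  (forall i, (i<N)%nat -> exists d, 0 < d /\ P i d) ->
  exists d, 0 < d /\ forall i, (i<N)%nat -> P i d.
Proof. intros Hm. induction N; intros H.
  - exists 1. split; [lra|]. intros; lia.
  - destruct IHN as [d1 [Hd1 HK1]]. { intros i Hi. apply H. lia. }
    destruct (H N ltac:(lia)) as [d2 [Hd2 HK2]]. exists (Rmin d1 d2).
    split. { apply Rmin_pos; auto. }
    intros i Hi. destruct (Nat.eq_dec i N).
    + subst. apply (Hm _ d2); auto. split; [apply Rmin_pos; auto| apply Rmin_r].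
    + apply (Hm _ d1); [|apply HK1; lia]. split; [apply Rmin_pos; auto| apply Rmin_l].
Qed.

Lemma lim_le u l b N : Un_cv u l -> (forall k, (N<=k)%nat -> u k <= b) -> l <= b.
Proof. intros Hu Hb. destruct (Rle_dec l b) as [|Hn]; auto. exfalso.
  destruct (Hu (l - b)) as [N1 HN1]; [lra|].
  specialize (HN1 (Nat.max N N1) ltac:(lia)). specialize (Hb (Nat.max N N1) ltac:(lia)).
  unfold R_dist in HN1. apply Rabs_def2 in HN1. lra. Qed.

Lemma lim_ge u l b N : Un_cv u l -> (forall k, (N<=k)%nat -> b <= u k) -> b <= l.
Proof. intros Hu Hb. destruct (Rle_dec b l) as [|Hn]; auto. exfalso.
  destruct (Hu (b - l)) as [N1 HN1]; [lra|].
  specialize (HN1 (Nat.max N N1) ltac:(lia)). specialize (Hb (Nat.max N N1) ltac:(lia)).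
  unfold R_dist in HN1. apply Rabs_def2 in HN1. lra. Qed.
Section Core.
Variable n : nat.
Variable W : Mat.
Variable K : nat.
Variable d : R.
Hypothesis Hn : (1 <= n)%nat.
Hypothesis HW : stoch n W.
Hypothesis Hd : 0 < d.
Hypothesis HK : forall l i, (l<n)%nat -> (i<n)%nat -> d <= iterV n W K (ej l) i.

Lemma iterV_one k i : (i<n)%nat -> iterV n W k (fun _ => 1) i = 1.
Proof. intros Hi. destruct (iterV_inb n W 1 1 (fun _ => 1) k HW) with (i:=i); auto.
  intros j _; lra. lra. Qed.

Lemma contract a b x : inb n a b x ->
  inb n (a + d * (x 0%nat - a)) (b - d * (b - x 0%nat)) (iterV n W K x).
Proof. intros Hx i Hi.
  set (v := fun j => iterV n W K (ej j) i).
  assert (Hv1 : rsum n v = 1).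
  { rewrite <- (iterV_one K i Hi). rewrite iterV_lin by exact Hi. apply rsum_ext; intros; unfold v; ring. }
  assert (Hv0 : forall j, (j<n)%nat -> d <= v j) by (intros; apply HK; auto).
  assert (HX : iterV n W K x i = rsum n (fun j => x j * v j)) by (apply iterV_lin; auto).
  assert (H0 := Hx 0%nat ltac:(lia)).
  split.
  - assert (E : iterV n W K x i - a = rsum n (fun j => (x j - a) * v j)).
    { rewrite HX. rewrite (rsum_ext _ (fun j => (x j - a) * v j) (fun j => x j * v j - a * v j)) by (intros; ring).
      rewrite rsum_minus, rsum_scal, Hv1. ring. }
    assert ((x 0%nat - a) * v 0%nat <= rsum n (fun j => (x j - a) * v j)).
    { apply (rsum_ge_term n (fun j => (x j - a) * v j)); [|lia]. intros k Hk.
      specialize (Hx k Hk). specialize (Hv0 k Hk). nra. }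
    assert (Hv00 := Hv0 0%nat ltac:(lia)). nra.
  - assert (E : b - iterV n W K x i = rsum n (fun j => (b - x j) * v j)).
    { rewrite HX. rewrite (rsum_ext _ (fun j => (b - x j) * v j) (fun j => b * v j - x j * v j)) by (intros; ring).
      rewrite rsum_minus, rsum_scal, Hv1. ring. }
    assert ((b - x 0%nat) * v 0%nat <= rsum n (fun j => (b - x j) * v j)).
    { apply (rsum_ge_term n (fun j => (b - x j) * v j)); [|lia]. intros k Hk.
      specialize (Hx k Hk). specialize (Hv0 k Hk). nra. }
    assert (Hv00 := Hv0 0%nat ltac:(lia)). nra.
Qed.

Lemma d_le1 : d <= 1.
Proof. assert (H := HK 0%nat 0%nat ltac:(lia) ltac:(lia)).
  destruct (iterV_inb n W 0 1 (ej 0) K HW (ej_inb n 0) 0%nat ltac:(lia)). lra. Qed.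

Variable x : Vec.
Variables a0 b0 : R.
Hypothesis Hx0 : inb n a0 b0 x.

Fixpoint ab (q : nat) : R * R :=
  match q with
  | O => (a0, b0)
  | S q' => let p := ab q' in
      (fst p + d * (iterV n W (q' * K) x 0%nat - fst p),
       snd p - d * (snd p - iterV n W (q' * K) x 0%nat))
  end.

Lemma ab_inv q : inb n (fst (ab q)) (snd (ab q)) (iterV n W (q * K) x).
Proof. induction q; [exact Hx0|]. simpl (fst (ab (S q))). simpl (snd (ab (S q))).
  change (S q * K)%nat with (K + q * K)%nat. rewrite iterV_add. apply contract. exact IHq. Qed.

Lemma ab_le q : fst (ab q) <= snd (ab q).
Proof. destruct (ab_inv q 0%nat ltac:(lia)). lra. Qed.

Lemma ab_grow q : fst (ab q) <= fst (ab (S q)).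
Proof. destruct (ab_inv q 0%nat ltac:(lia)). simpl. nra. Qed.

Lemma ab_dec q : snd (ab (S q)) <= snd (ab q).
Proof. destruct (ab_inv q 0%nat ltac:(lia)). simpl. nra. Qed.

Lemma ab_dec2 q r : (q <= r)%nat -> snd (ab r) <= snd (ab q).
Proof. induction 1; [lra|]. pose proof (ab_dec m). lra. Qed.

Lemma ab_width q : snd (ab q) - fst (ab q) = (1 - d) ^ q * (b0 - a0).
Proof. induction q; [simpl; ring|]. simpl (ab (S q)). simpl pow. cbn [fst snd]. rewrite Rmult_assoc, <- IHq. ring. Qed.

Lemma core_conv : exists c, forall i, (i<n)%nat -> Un_cv (fun k => iterV n W k x i) c.
Proof.
  assert (Hg : Un_growing (fun q => fst (ab q))) by (intro q; apply ab_grow).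
  assert (Hub : has_ub (fun q => fst (ab q))).
  { exists b0. intros y [q ->]. pose proof (ab_le q). pose proof (ab_dec2 0 q ltac:(lia)). simpl in *. lra. }
  destruct (growing_cv _ Hg Hub) as [c Hc]. exists c.
  assert (Hlo : forall q, fst (ab q) <= c) by (apply growing_ineq; auto).
  assert (Hhi : forall q, c <= snd (ab q)).
  { intros q. apply (lim_le _ _ _ q Hc). intros k Hk. pose proof (ab_le k). pose proof (ab_dec2 q k Hk). lra. }
  assert (Hw0 : 0 <= b0 - a0) by (pose proof (ab_le 0); simpl in *; lra).
  pose proof d_le1.
  intros i Hi eps Heps.
  destruct (pow_lt_1_zero (1 - d)) with (y := eps / (b0 - a0 + 1)) as [N HN].
  { rewrite Rabs_pos_eq; lra. }
  { apply Rdiv_lt_0_compat; lra. }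
  exists (N * K)%nat. intros k Hk.
  specialize (HN N (le_n N)). rewrite Rabs_pos_eq in HN by (apply pow_le; lra).
  assert (Hwid := ab_width N).
  assert (Hin : fst (ab N) <= iterV n W k x i <= snd (ab N)).
  { replace k with ((k - N * K) + N * K)%nat by lia. rewrite iterV_add.
    apply (iterV_inb n W _ _ _ _ HW (ab_inv N)); auto. }
  pose proof (Hlo N). pose proof (Hhi N).
  assert (Hsm : (1 - d) ^ N * (b0 - a0) < eps).
  { apply Rle_lt_trans with (eps / (b0 - a0 + 1) * (b0 - a0)).
    - apply Rmult_le_compat_r; lra.
    - apply Rlt_le_trans with (eps / (b0 - a0 + 1) * (b0 - a0 + 1)).
      + apply Rmult_lt_compat_l; [apply Rdiv_lt_0_compat; lra| lra].
      + right. field. lra. }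
  unfold R_dist. apply Rabs_def1; lra.
Qed.

End Core.

Lemma Un_cv_ext u v l : (forall k, u k = v k) -> Un_cv u l -> Un_cv v l.
Proof. intros H Hu eps He. destruct (Hu eps He) as [N HN]. exists N. intros k Hk. rewrite <- H. auto. Qed.

Lemma Un_cv_const c : Un_cv (fun _ => c) c.
Proof. intros eps He. exists 0%nat. intros. unfold R_dist. rewrite Rminus_diag, Rabs_R0. lra. Qed.

Lemma Un_cv_shift u l : Un_cv u l -> Un_cv (fun k => u (S k)) l.
Proof. intros Hu eps He. destruct (Hu eps He) as [N HN]. exists N. intros k Hk. apply HN. lia. Qed.

Lemma CV_rsum m (f : nat -> nat -> R) (l : nat -> R) :
  (forall j, (j<m)%nat -> Un_cv (fun k => f k j) (l j)) ->
  Un_cv (fun k => rsum m (f k)) (rsum m l).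
Proof. induction m; intros H; simpl.
  - apply Un_cv_const.
  - apply CV_plus. apply IHm; intros; apply H; lia. apply H; lia. Qed.

Lemma mpow_iterV n W k i j : (i<n)%nat -> (j<n)%nat -> mpow n W k i j = iterV n W k (ej j) i.
Proof. revert i; induction k; intros i Hi Hj; [reflexivity|].
  rewrite iterV_S. simpl. unfold mmul, mvec. apply rsum_ext. intros l Hl. rewrite IHk; auto. Qed.

Definition gen_concl n (W : Mat) (pi : Vec) : Prop :=
    (forall i, (i < n)%nat -> 0 < pi i) /\
    rsum n pi = 1 /\
    (forall j, (j < n)%nat -> rsum n (fun i => pi i * W i j) = pi j) /\
    (forall i j, (i < n)%nat -> (j < n)%nat ->
       Un_cv (fun k => mpow n W k i j) (pi j)) /\
    (forall x0 : Vec, forall i, (i < n)%nat ->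
       Un_cv (fun k => iterV n W k x0 i) (rsum n (fun j => pi j * x0 j))).

Lemma general n W : (1 <= n)%nat -> stoch n W -> (forall i, (i<n)%nat -> 0 < W i i) ->
  strongly_connected n (fun i j => 0 < W j i) -> exists pi, gen_concl n W pi.
Proof. intros Hn HW Hd Hsc.
  assert (HK : exists K, forall l, (l<n)%nat -> forall k, (K<=k)%nat ->
      forall i, (i<n)%nat -> 0 < iterV n W k (ej l) i).
  { apply fin_K. intros l Hl.
    destruct (fin_K (fun i k => 0 < iterV n W k (ej l) i) n) as [K0 H0].
    { intros i Hi. apply reach_pos; auto. }
    exists K0. intros k Hk i Hi. apply H0; auto. }
  destruct HK as [K HK].
  assert (Hdl : exists d, 0 < d /\ forall l, (l<n)%nat -> forall i, (i<n)%nat -> d <= iterV n W K (ej l) i).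
  { apply (fin_min (fun l d => forall i, (i<n)%nat -> d <= iterV n W K (ej l) i)).
    - intros l dd dd' H1 H2 i Hi. specialize (H2 i Hi). lra.
    - intros l Hl. apply (fin_min (fun i d => d <= iterV n W K (ej l) i)).
      + intros; lra.
      + intros i Hi. exists (iterV n W K (ej l) i). split; [apply HK; auto|lra]. }
  destruct Hdl as [d [Hd0 Hdd]].
  assert (Hc : forall x, exists c, forall i, (i<n)%nat -> Un_cv (fun k => iterV n W k x i) c).
  { intros x. set (S := rsum n (fun i => Rabs (x i))).
    apply (core_conv n W K d Hn HW Hd0 ltac:(intros; apply Hdd; auto) x (- S) S).
    intros i Hi. assert (Rabs (x i) <= S).
    { apply (rsum_ge_term n (fun i => Rabs (x i))); auto. intros; apply Rabs_pos. }
    pose proof (Rle_abs (x i)). pose proof (Rle_abs (- x i)). rewrite Rabs_Ropp in *. lra. }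
  destruct (functional_choice (fun j c => forall i, (i<n)%nat -> Un_cv (fun k => iterV n W k (ej j) i) c))
    as [pi Hpi].
  { intros j. apply Hc. }
  exists pi.
  assert (Hx : forall x0 i, (i < n)%nat ->
       Un_cv (fun k => iterV n W k x0 i) (rsum n (fun j => pi j * x0 j))).
  { intros x0 i Hi. apply (Un_cv_ext (fun k => rsum n (fun j => x0 j * iterV n W k (ej j) i))).
    { intros k. rewrite <- iterV_lin; auto. }
    rewrite (rsum_ext _ _ (fun j => x0 j * pi j)) by (intros; ring).
    apply CV_rsum. intros j Hj. apply CV_mult. apply Un_cv_const. apply Hpi. auto. }
  split; [|split; [|split; [|split]]].
  - intros j Hj. apply (Rlt_le_trans _ d); auto. apply (lim_ge _ _ d K (Hpi j 0%nat ltac:(lia))).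
    intros k Hk. replace k with ((k - K) + K)%nat by lia. rewrite iterV_add.
    assert (Hb : inb n d 1 (iterV n W K (ej j))).
    { intros i Hi. split. apply Hdd; auto. destruct (iterV_inb n W 0 1 (ej j) K HW (ej_inb n j) i Hi). lra. }
    destruct (iterV_inb n W d 1 _ (k - K) HW Hb 0%nat ltac:(lia)). lra.
  - specialize (Hx (fun _ => 1) 0%nat ltac:(lia)).
    assert (H1 : Un_cv (fun k => iterV n W k (fun _ => 1) 0%nat) 1).
    { apply (Un_cv_ext (fun _ => 1)). intros k. symmetry. apply (iterV_one n W HW). lia. apply Un_cv_const. }
    pose proof (UL_sequence _ _ _ Hx H1) as E. rewrite <- E. apply rsum_ext. intros; ring.
  - intros j Hj. assert (A := Hx (mvec n W (ej j)) 0%nat ltac:(lia)).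
    assert (B : Un_cv (fun k => iterV n W k (mvec n W (ej j)) 0%nat) (pi j)).
    { apply (Un_cv_ext (fun k => iterV n W (S k) (ej j) 0%nat)). intros; reflexivity.
      apply (Un_cv_shift (fun k => iterV n W k (ej j) 0%nat)), Hpi; lia. }
    rewrite <- (UL_sequence _ _ _ A B). apply rsum_ext. intros i Hi. unfold mvec, ej.
    rewrite (rsum_mid_r n j (fun k => W i k)); auto.
  - intros i j Hi Hj. apply (Un_cv_ext (fun k => iterV n W k (ej j) i)).
    intros k. rewrite mpow_iterV; auto. apply Hpi; auto.
  - exact Hx.
Qed.

Lemma fr_app (l1 l2 : list R) : fold_right Rplus 0 (l1 ++ l2) = fold_right Rplus 0 l1 + fold_right Rplus 0 l2.
Proof. induction l1; simpl; [ring|]. rewrite IHl1; ring. Qed.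

Lemma fr_scal {A} c (f : A -> R) l : fold_right Rplus 0 (map (fun s => c * f s) l) = c * fold_right Rplus 0 (map f l).
Proof. induction l; simpl; [ring|]. rewrite IHl; ring. Qed.

Lemma expect_S n M p k x0 i : expect_state n M p (S k) x0 i =
  p 1%nat * expect_state n M p k (mvec n (M 1%nat) x0) i +
  p 2%nat * expect_state n M p k (mvec n (M 2%nat) x0) i +
  p 3%nat * expect_state n M p k (mvec n (M 3%nat) x0) i +
  p 4%nat * expect_state n M p k (mvec n (M 4%nat) x0) i.
Proof. unfold expect_state. cbn [seqs flat_map modes]. rewrite !map_app, !fr_app, !map_map.
  rewrite <- !fr_scal. cbn [map fold_right]. rewrite Rplus_0_r.
  rewrite !Rplus_assoc. f_equal; [|f_equal; [|f_equal]]; f_equal; apply map_ext; intros; simpl; ring.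
Qed.

Definition Wof (M : nat -> Mat) (p : nat -> R) : Mat := msum4 (fun m => mscal (p m) (M m)).

Lemma mvec_msum4 n M p x j : mvec n (Wof M p) x j =
  p 1%nat * mvec n (M 1%nat) x j + p 2%nat * mvec n (M 2%nat) x j +
  p 3%nat * mvec n (M 3%nat) x j + p 4%nat * mvec n (M 4%nat) x j.
Proof. unfold mvec, Wof, msum4, mscal. rewrite <- !rsum_scal, <- !rsum_plus. apply rsum_ext; intros; ring. Qed.

Lemma expect_iter n M p k : forall x0 i, (i<n)%nat ->
  expect_state n M p k x0 i = iterV n (Wof M p) k x0 i.
Proof. induction k; intros x0 i Hi.
  - unfold expect_state. simpl. ring.
  - rewrite expect_S, !IHk by exact Hi. change (iterV n (Wof M p) (S k) x0 i) with
      (iterV n (Wof M p) k (mvec n (Wof M p) x0) i).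
    rewrite !(iterV_lin n _ k _ i Hi).
    rewrite (rsum_ext n (fun j => mvec n (Wof M p) x0 j * iterV n (Wof M p) k (ej j) i) (fun j => p 1%nat * (mvec n (M 1%nat) x0 j * iterV n (Wof M p) k (ej j) i) +
       p 2%nat * (mvec n (M 2%nat) x0 j * iterV n (Wof M p) k (ej j) i) +
       p 3%nat * (mvec n (M 3%nat) x0 j * iterV n (Wof M p) k (ej j) i) +
       p 4%nat * (mvec n (M 4%nat) x0 j * iterV n (Wof M p) k (ej j) i))).
    + rewrite !rsum_plus, !rsum_scal. reflexivity.
    + intros j Hj. rewrite mvec_msum4. ring.
Qed.

Lemma consensus_from n M p : (1<=n)%nat -> stoch n (Wof M p) ->
  (forall i, (i<n)%nat -> 0 < Wof M p i i) ->
  strongly_connected n (fun i j => 0 < Wof M p j i) -> consensus_in_mean n M p.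
Proof. intros Hn HW Hd Hs. destruct (general n (Wof M p) Hn HW Hd Hs) as [pi (G1 & G2 & G3 & G4 & G5)].
  unfold consensus_in_mean. exists pi. fold (Wof M p). split; [|split; [|split; [|split]]]; auto.
  intros x0 i Hi. apply (Un_cv_ext (fun k => iterV n (Wof M p) k x0 i)).
  intros k. symmetry. apply expect_iter; auto. apply G5; auto.
Qed.

Definition rows n (A : Mat) r := forall i, (i<n)%nat -> rsum n (A i) = r.
Definition nonneg n (A : Mat) := forall i j, (i<n)%nat -> (j<n)%nat -> 0 <= A i j.

Lemma mmul_nonneg n A B : nonneg n A -> nonneg n B -> nonneg n (mmul n A B).
Proof. intros HA HB i j Hi Hj. unfold mmul. apply rsum_nonneg. intros k Hk.
  apply Rmult_le_pos; auto. Qed.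

Lemma mpow_nonneg n A k : nonneg n A -> nonneg n (mpow n A k).
Proof. intros HA. induction k; simpl.
  - intros i j _ _. unfold mid. destruct (Nat.eqb i j); lra.
  - apply mmul_nonneg; auto. Qed.

Lemma mmul_rows n A B rA rB : rows n A rA -> rows n B rB -> rows n (mmul n A B) (rA * rB).
Proof. intros HA HB i Hi. unfold mmul.
  rewrite (rsum_swap n n (fun j l => A i l * B l j)).
  rewrite (rsum_ext _ _ (fun l => rB * A i l)).
  - rewrite rsum_scal, HA; auto. ring.
  - intros l Hl. rewrite rsum_scal, HB; auto. ring. Qed.

Lemma mid_rows n : rows n mid 1.
Proof. intros i Hi. rewrite <- (rsum_mid_l n i (fun _ => 1) Hi). apply rsum_ext. intros; ring. Qed.

Lemma mpow_rows n A r k : rows n A r -> rows n (mpow n A k) (r ^ k).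
Proof. intros HA. induction k; simpl.
  - apply mid_rows.
  - apply mmul_rows; auto. Qed.

Lemma mmul_ge n A B i l j : nonneg n A -> nonneg n B -> (i<n)%nat -> (l<n)%nat -> (j<n)%nat ->
  A i l * B l j <= mmul n A B i j.
Proof. intros HA HB Hi Hl Hj. unfold mmul. apply (rsum_ge_term n (fun k => A i k * B k j)); auto.
  intros k Hk. apply Rmult_le_pos; auto. Qed.

Lemma mpow1 n A i j : (j<n)%nat -> mpow n A 1 i j = A i j.
Proof. intros Hj. simpl. unfold mmul. apply rsum_mid_r; auto. Qed.

Lemma mpow_diag n A k i : nonneg n A -> (i<n)%nat -> 0 < A i i -> 0 < mpow n A k i i.
Proof. intros HA Hi Hd. induction k.
  - simpl. rewrite mid_eq. lra.
  - eapply Rlt_le_trans; [|apply (mmul_ge n A (mpow n A k) i i i); auto; apply mpow_nonneg; auto].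
    apply Rmult_lt_0_compat; auto. Qed.

Lemma mpow_entry n A k i j : nonneg n A -> (i<n)%nat -> (j<n)%nat -> 0 < A i i -> 0 < A i j ->
  0 < mpow n A (S k) i j.
Proof. intros HA Hi Hj Hd He. induction k.
  - rewrite mpow1; auto.
  - eapply Rlt_le_trans; [|apply (mmul_ge n A (mpow n A (S k)) i i j); auto; apply mpow_nonneg; auto].
    apply Rmult_lt_0_compat; auto. Qed.

Lemma reach_mono n (adj1 adj2 : nat -> nat -> Prop) i j :
  (forall u v, (u<n)%nat -> (v<n)%nat -> adj1 u v -> adj2 u v) -> reach n adj1 i j -> reach n adj2 i j.
Proof. intros H Hr. induction Hr.
  - apply reach_refl; auto.
  - apply reach_step with j; auto. apply H; auto. eapply reach_lt; eauto. Qed.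

Lemma combine n a M al be ga th : (1<=n)%nat -> sym_irrefl n a -> connected n a ->
  0 < al -> 0 < be -> 0 < ga -> 0 < th -> al + be + ga + th = 1 ->
  (forall m, (1 <= m <= 4)%nat -> nonneg n (M m) /\ rows n (M m) 1 /\
     forall i, (i<n)%nat -> 0 < M m i i) ->
  (forall i j, (i<n)%nat -> (j<n)%nat -> a i j = true -> 0 < M 4%nat i j) ->
  consensus_in_mean n M (prob al be ga th).
Proof. intros Hn [Hsym Hirr] Hc Ha Hb Hg Ht Hs HM H4.
  destruct (HM 1%nat ltac:(lia)) as (N1 & R1 & D1).
  destruct (HM 2%nat ltac:(lia)) as (N2 & R2 & D2).
  destruct (HM 3%nat ltac:(lia)) as (N3 & R3 & D3).
  destruct (HM 4%nat ltac:(lia)) as (N4 & R4 & D4).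
  apply consensus_from; auto.
  - split.
    + intros i j Hi Hj. unfold Wof, msum4, mscal, prob.
      specialize (N1 i j Hi Hj); specialize (N2 i j Hi Hj); specialize (N3 i j Hi Hj); specialize (N4 i j Hi Hj).
      assert (0 <= al * M 1%nat i j) by (apply Rmult_le_pos; lra).
      assert (0 <= be * M 2%nat i j) by (apply Rmult_le_pos; lra).
      assert (0 <= ga * M 3%nat i j) by (apply Rmult_le_pos; lra).
      assert (0 <= th * M 4%nat i j) by (apply Rmult_le_pos; lra). lra.
    + intros i Hi. unfold Wof, msum4, mscal, prob. rewrite !rsum_plus, !rsum_scal.
      rewrite R1, R2, R3, R4; auto. lra.
  - intros i Hi. unfold Wof, msum4, mscal, prob.
      specialize (D1 i Hi); specialize (D2 i Hi); specialize (D3 i Hi); specialize (D4 i Hi).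
      assert (0 < al * M 1%nat i i) by (apply Rmult_lt_0_compat; lra).
      assert (0 < be * M 2%nat i i) by (apply Rmult_lt_0_compat; lra).
      assert (0 < ga * M 3%nat i i) by (apply Rmult_lt_0_compat; lra).
      assert (0 < th * M 4%nat i i) by (apply Rmult_lt_0_compat; lra). lra.
  - intros i j Hi Hj. apply (reach_mono n (fun i j => a i j = true)); [|apply Hc; auto].
    intros u v Hu Hv Huv. rewrite Hsym in Huv by auto.
    specialize (H4 v u Hv Hu Huv). unfold Wof, msum4, mscal, prob.
      specialize (N1 v u Hv Hu); specialize (N2 v u Hv Hu); specialize (N3 v u Hv Hu).
      assert (0 <= al * M 1%nat v u) by (apply Rmult_le_pos; lra).
      assert (0 <= be * M 2%nat v u) by (apply Rmult_le_pos; lra).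
      assert (0 <= ga * M 3%nat v u) by (apply Rmult_le_pos; lra).
      assert (0 < th * M 4%nat v u) by (apply Rmult_lt_0_compat; lra). lra.
Qed.

Lemma aR_01 a i j : 0 <= aR a i j <= 1.
Proof. unfold aR. destruct (a i j); lra. Qed.

Lemma Amode_bounds scen a m i j : 0 <= Amode scen a m i j <= aR a i j.
Proof. pose proof (aR_01 a i j). unfold Amode. destruct (if scen then fails m i else fails m j); lra. Qed.

Lemma Amode4 scen a i j : Amode scen a 4%nat i j = aR a i j.
Proof. unfold Amode. destruct scen; reflexivity. Qed.

Lemma Amode_diag scen a m i : a i i = false -> Amode scen a m i i = 0.
Proof. intros H. unfold Amode, aR. rewrite H. destruct (if scen then fails m i else fails m i); reflexivity. Qed.

Lemma rmaxn_ge n f i : (i<n)%nat -> f i <= rmaxn n f.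
Proof. induction n; intros Hi; [lia|]. simpl. destruct (Nat.eq_dec i n).
  - subst. apply Rmax_r.
  - eapply Rle_trans; [apply IHn; lia| apply Rmax_l]. Qed.

Lemma rmaxn_nonneg n f : 0 <= rmaxn n f.
Proof. induction n; simpl; [lra|]. eapply Rle_trans; [exact IHn| apply Rmax_l]. Qed.

Lemma rowA_bounds n scen a m i : (i<n)%nat ->
  0 <= rsum n (Amode scen a m i) <= dmax n a.
Proof. intros Hi. split.
  - apply rsum_nonneg. intros. apply Amode_bounds.
  - apply Rle_trans with (deg n a i).
    + unfold deg. apply rsum_le. intros. apply Amode_bounds.
    + unfold dmax. apply (rmaxn_ge n (deg n a)); auto. Qed.

Lemma Lmode_rows n scen a m : rows n (Lmode n scen a m) 0.
Proof. intros i Hi. unfold Lmode, lap. rewrite rsum_minus.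
  rewrite (rsum_ext _ _ (fun j => mid i j * rsum n (Amode scen a m i))).
  - rewrite rsum_mid_l; auto. ring.
  - intros j Hj. unfold mid. destruct (Nat.eqb i j); ring. Qed.

Lemma Lmode_entry n scen a m i j : Lmode n scen a m i j =
  mid i j * rsum n (Amode scen a m i) - Amode scen a m i j.
Proof. unfold Lmode, lap, mid. destruct (Nat.eqb i j); ring. Qed.

Lemma hdmax n a h : 0 < h -> h < 1 / dmax n a -> h * dmax n a < 1.
Proof. intros Hh Hd. pose proof (rmaxn_nonneg n (deg n a)). fold (dmax n a) in H.
  destruct (Req_dec (dmax n a) 0) as [E|E].
  - rewrite E. lra.
  - assert (0 < dmax n a) by lra. unfold Rdiv in Hd. rewrite Rmult_1_l in Hd.
    apply Rmult_lt_compat_r with (r := dmax n a) in Hd; auto.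
    rewrite Rinv_l in Hd by lra. exact Hd. Qed.

Lemma Bmode_props n scen a h m : sym_irrefl n a -> 0 < h -> h * dmax n a < 1 ->
  let B := madd mid (mscal (- h) (Lmode n scen a m)) in
  nonneg n B /\ rows n B 1 /\ (forall i, (i<n)%nat -> 0 < B i i) /\
  (forall i j, (i<n)%nat -> (j<n)%nat -> a i j = true -> h * Amode scen a m i j <= B i j).
Proof. intros [Hs Hirr] Hh Hd B. unfold B, madd, mscal.
  assert (Hoff : forall i j, (i<n)%nat -> i <> j ->
     mid i j + - h * Lmode n scen a m i j = h * Amode scen a m i j).
  { intros i j Hi Hij. rewrite Lmode_entry, mid_neq by auto. ring. }
  assert (Hdg : forall i, (i<n)%nat -> 0 < mid i i + - h * Lmode n scen a m i i).
  { intros i Hi. rewrite Lmode_entry, mid_eq, Amode_diag by auto.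
    pose proof (rowA_bounds n scen a m i Hi). nra. }
  split; [|split; [|split]].
  - intros i j Hi Hj. destruct (Nat.eq_dec i j).
    + subst. apply Rlt_le, Hdg; auto.
    + rewrite Hoff by auto. pose proof (Amode_bounds scen a m i j). nra.
  - intros i Hi. rewrite rsum_plus, rsum_scal. fold (Lmode n scen a m i).
    rewrite Lmode_rows, mid_rows by auto. ring.
  - exact Hdg.
  - intros i j Hi Hj Ha. destruct (Nat.eq_dec i j).
    + subst. rewrite Hirr in Ha by auto. discriminate.
    + rewrite Hoff by auto. lra.
Qed.

Lemma part_i n a scen al be ga th h kbar : (3 <= n)%nat -> sym_irrefl n a -> connected n a ->
  0 < al < 1 -> 0 < be < 1 -> 0 < ga < 1 -> 0 < th < 1 -> al + be + ga + th = 1 ->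
  (1 <= kbar)%nat -> 0 < h -> h < 1 / dmax n a ->
  consensus_in_mean n
    (fun m => mpow n (madd mid (mscal (- h) (Lmode n scen a m))) kbar)
    (prob al be ga th).
Proof. intros Hn Hsi Hc Ha Hb Hg Ht Hs Hk Hh Hd. pose proof (hdmax n a h Hh Hd) as Hd'.
  apply combine with a; auto; try lra; try lia.
  - intros m _. destruct (Bmode_props n scen a h m Hsi Hh Hd') as (B1 & B2 & B3 & B4).
    split; [|split].
    + apply mpow_nonneg; auto.
    + replace 1 with (1 ^ kbar) by apply pow1. apply mpow_rows; auto.
    + intros i Hi. apply mpow_diag; auto.
  - intros i j Hi Hj Hij. destruct (Bmode_props n scen a h 4 Hsi Hh Hd') as (B1 & B2 & B3 & B4).
    destruct kbar as [|k]; [lia|]. apply mpow_entry; auto.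
    eapply Rlt_le_trans; [|apply B4; auto]. rewrite Amode4. unfold aR. rewrite Hij. lra.
Qed.

Lemma fact_INR_S k : INR (fact (S k)) = INR (S k) * INR (fact k).
Proof. rewrite fact_simpl, mult_INR. reflexivity. Qed.

Lemma pascal_scalar (g : nat -> R) (y : R) (k : nat) :
  sum_f_R0 (fun a => g (S a) / INR (fact a) * (/ INR (fact (k - a)) * y ^ (k - a))) k +
  y * sum_f_R0 (fun a => g a / INR (fact a) * (/ INR (fact (k - a)) * y ^ (k - a))) k =
  INR (S k) * sum_f_R0 (fun a => g a / INR (fact a) * (/ INR (fact (S k - a)) * y ^ (S k - a))) (S k).
Proof.
  set (T := fun a => g a / INR (fact a) * (/ INR (fact (S k - a)) * y ^ (S k - a))).
  rewrite (scal_sum _ (S k) (INR (S k))).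
  rewrite (sum_eq (fun i => T i * INR (S k)) (fun a => INR a * T a + INR (S k - a) * T a)).
  2:{ intros a Ha. rewrite minus_INR by exact Ha. unfold T. ring. }
  rewrite sum_plus. f_equal.
  - rewrite (decomp_sum (fun a => INR a * T a)) by lia. simpl pred. rewrite Rmult_0_l, Rplus_0_l.
    apply sum_eq. intros a Ha. unfold T. simpl (S k - S a)%nat. rewrite fact_INR_S.
    field. repeat split; first [apply INR_fact_neq_0 | apply not_0_INR; lia].
  - rewrite tech5. rewrite Nat.sub_diag, Rmult_0_l, Rplus_0_r. rewrite scal_sum.
    apply sum_eq. intros a Ha. unfold T. replace (S k - a)%nat with (S (k - a)) by lia.
    rewrite fact_INR_S. simpl pow. field. repeat split; first [apply INR_fact_neq_0 | apply not_0_INR; lia].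
Qed.

Lemma rsum_sumf n K (f : nat -> nat -> R) :
  rsum n (fun l => sum_f_R0 (fun a => f l a) K) = sum_f_R0 (fun a => rsum n (fun l => f l a)) K.
Proof. induction n; simpl.
  - induction K; simpl; [reflexivity|]. rewrite <- IHK. ring.
  - rewrite IHn, <- sum_plus. reflexivity. Qed.

Definition cterm n (N : Mat) (y : R) (k i j : nat) :=
  sum_f_R0 (fun a => mpow n N a i j / INR (fact a) * (/ INR (fact (k - a)) * y ^ (k - a))) k.

Lemma binom_mx n M N y : (forall i j, M i j = N i j + y * mid i j) ->
  forall k i j, (i<n)%nat -> (j<n)%nat -> mpow n M k i j = INR (fact k) * cterm n N y k i j.
Proof. intros HMN k. induction k; intros i j Hi Hj.
  - unfold cterm. simpl. field.
  - change (mpow n M (S k) i j) with (rsum n (fun l => M i l * mpow n M k l j)).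
    rewrite (rsum_ext _ _ (fun l => INR (fact k) * (N i l * cterm n N y k l j) + INR (fact k) * y * (mid i l * cterm n N y k l j))).
    2:{ intros l Hl. rewrite IHk, HMN by auto. ring. }
    rewrite rsum_plus, !rsum_scal, rsum_mid_l by auto.
    unfold cterm at 1. 
    rewrite (rsum_ext _ _ (fun l => sum_f_R0 (fun a => N i l * mpow n N a l j / INR (fact a) * (/ INR (fact (k - a)) * y ^ (k - a))) k)).
    2:{ intros l Hl. unfold cterm. rewrite scal_sum. apply sum_eq. intros. unfold Rdiv. ring. }
    rewrite rsum_sumf.
    rewrite (sum_eq _ (fun a => mpow n N (S a) i j / INR (fact a) * (/ INR (fact (k - a)) * y ^ (k - a)))).
    2:{ intros a Ha. simpl (mpow n N (S a)). unfold mmul. unfold Rdiv.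
        rewrite (rsum_ext _ _ (fun l => (/ INR (fact a) * (/ INR (fact (k - a)) * y ^ (k - a))) * (N i l * mpow n N a l j))) by (intros; ring).
        rewrite rsum_scal. ring. }
    rewrite fact_INR_S.
    transitivity (INR (fact k) * (sum_f_R0 (fun a => mpow n N (S a) i j / INR (fact a) * (/ INR (fact (k - a)) * y ^ (k - a))) k + y * cterm n N y k i j)); [ring|].
    unfold cterm. rewrite (pascal_scalar (fun a => mpow n N a i j) y k). ring.
Qed.

Lemma exp_series x : Un_cv (fun K => sum_f_R0 (fun l => / INR (fact l) * x ^ l) K) (exp x).
Proof. exact (proj2_sig (exist_exp x)). Qed.

Lemma exp_rows n M E : rows n M 0 -> is_mexp n M E -> rows n E 1.
Proof. intros HM HE i Hi.
  assert (H1 := CV_rsum n (fun K j => sum_f_R0 (fun k => mpow n M k i j / INR (fact k)) K) (E i)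
     ltac:(intros j Hj; apply HE; auto)).
  simpl in H1.
  assert (H2 : Un_cv (fun K => rsum n (fun j => sum_f_R0 (fun k => mpow n M k i j / INR (fact k)) K)) 1).
  { apply (Un_cv_ext (fun _ => 1)); [|apply Un_cv_const]. intros K.
    rewrite (rsum_sumf n K (fun j k => mpow n M k i j / INR (fact k))).
    rewrite (sum_eq _ (fun k => 0 ^ k / INR (fact k))).
    - induction K. simpl. field. rewrite tech5, <- IHK. simpl pow. unfold Rdiv. ring.
    - intros k _. unfold Rdiv. rewrite (rsum_ext _ _ (fun j => / INR (fact k) * mpow n M k i j)) by (intros; ring).
      rewrite rsum_scal. rewrite (mpow_rows n M 0 k HM i Hi). ring. }
  exact (UL_sequence _ _ _ H1 H2).
Qed.

Section ExpSec.
Import Coquelicot.Hierarchy.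
Variable n : nat.
Variables M N E : Mat.
Variable c : R.
Hypothesis Hn : (1 <= n)%nat.
Hypothesis HMN : forall i j, M i j = N i j + (- c) * mid i j.
Hypothesis HN : nonneg n N.
Hypothesis HNr : rows n N c.
Hypothesis HE : is_mexp n M E.

Lemma exp_lower i j : (i<n)%nat -> (j<n)%nat ->
  0 <= E i j /\ exp (- c) * (mid i j + N i j) <= E i j.
Proof. intros Hi Hj.
  assert (Hc : 0 <= c).
  { rewrite <- (HNr 0%nat) by lia. apply rsum_nonneg. intros; apply HN; auto; lia. }
  set (a := fun l => mpow n N l i j / INR (fact l)).
  set (b := fun m => / INR (fact m) * (- c) ^ m).
  assert (Ha0 : forall l, 0 <= a l).
  { intros l. unfold a, Rdiv. apply Rmult_le_pos; [apply mpow_nonneg; auto|].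
    apply Rlt_le, Rinv_0_lt_compat, INR_fact_lt_0. }
  assert (Hale : forall l, a l <= / INR (fact l) * c ^ l).
  { intros l. unfold a, Rdiv. rewrite Rmult_comm. apply Rmult_le_compat_l.
    apply Rlt_le, Rinv_0_lt_compat, INR_fact_lt_0.
    rewrite <- (mpow_rows n N c l HNr i Hi). apply (rsum_ge_term n (mpow n N l i)); auto.
    intros; apply mpow_nonneg; auto. }
  assert (Hg : Un_growing (fun K => sum_f_R0 a K)).
  { intros K. rewrite tech5. pose proof (Ha0 (S K)). lra. }
  assert (Hgc : Un_growing (fun K => sum_f_R0 (fun l => / INR (fact l) * c ^ l) K)).
  { intros K. rewrite tech5. assert (0 <= / INR (fact (S K)) * c ^ S K); [|lra].
    apply Rmult_le_pos; [apply Rlt_le, Rinv_0_lt_compat, INR_fact_lt_0| apply pow_le; auto]. }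
  assert (Hub : has_ub (fun K => sum_f_R0 a K)).
  { exists (exp c). intros v [K ->]. apply Rle_trans with (sum_f_R0 (fun l => / INR (fact l) * c ^ l) K).
    - apply sum_Rle. intros; apply Hale.
    - apply growing_ineq; auto. apply exp_series. }
  destruct (growing_cv _ Hg Hub) as [T HT].
  assert (HaS : Coquelicot.Series.is_series a T) by (apply Coquelicot.Series.is_series_Reals; exact HT).
  assert (HbS : Coquelicot.Series.is_series b (exp (- c))) by (apply Coquelicot.Series.is_series_Reals; exact (exp_series (- c))).
  assert (HaA : Coquelicot.Series.ex_series (fun l => Rabs (a l))).
  { exists T. apply Coquelicot.Series.is_series_Reals.
    apply (Un_cv_ext (fun K => sum_f_R0 a K)); auto. intros K. apply sum_eq. intros.
    rewrite Rabs_pos_eq; auto. }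
  assert (HbA : Coquelicot.Series.ex_series (fun l => Rabs (b l))).
  { exists (exp (Rabs (- c))). apply Coquelicot.Series.is_series_Reals.
    apply (Un_cv_ext (fun K => sum_f_R0 (fun l => / INR (fact l) * Rabs (- c) ^ l) K)); [|apply exp_series].
    intros K. apply sum_eq. intros l _. unfold b. rewrite Rabs_mult, <- RPow_abs. f_equal.
    rewrite Rabs_inv, Rabs_pos_eq; auto. apply pos_INR. }
  pose proof (Coquelicot.Series.is_series_mult a b T (exp (- c)) HaS HbS HaA HbA) as Hm.
  apply Coquelicot.Series.is_series_Reals in Hm.
  assert (HEij : Un_cv (fun K => sum_f_R0 (fun k => sum_f_R0 (fun l => a l * b (k - l)%nat) k) K) (E i j)).
  { apply (Un_cv_ext (fun K => sum_f_R0 (fun k => mpow n M k i j / INR (fact k)) K)); [|apply HE; auto].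
    intros K. apply sum_eq. intros k _. rewrite (binom_mx n M N (- c) HMN k i j Hi Hj).
    unfold cterm, a, b. field. apply INR_fact_neq_0. }
  assert (Eq : E i j = T * exp (- c)) by exact (UL_sequence _ _ _ HEij Hm).
  assert (HT1 : sum_f_R0 a 1 <= T) by (apply growing_ineq; auto).
  simpl in HT1. unfold a in HT1. rewrite mpow1 in HT1 by auto. simpl in HT1.
  assert (Hmid : 0 <= mid i j) by (unfold mid; destruct (Nat.eqb i j); lra).
  pose proof (HN i j Hi Hj). pose proof (exp_pos (- c)).
  assert (mid i j + N i j <= T) by lra.
  rewrite Eq. split; nra.
Qed.
End ExpSec.

Lemma part_ii n a scen al be ga th h kbar : (3 <= n)%nat -> sym_irrefl n a -> connected n a ->
  0 < al < 1 -> 0 < be < 1 -> 0 < ga < 1 -> 0 < th < 1 -> al + be + ga + th = 1 ->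
  (1 <= kbar)%nat -> 0 < h ->
  (forall E : nat -> Mat,
     (forall m, (1 <= m <= 4)%nat ->
        is_mexp n (mscal (- (INR kbar * h)) (Lmode n scen a m)) (E m)) ->
     consensus_in_mean n E (prob al be ga th)).
Proof. intros Hn Hsi Hc Ha Hb Hg Ht Hs Hk Hh E HE.
  destruct Hsi as [Hsym Hirr].
  set (D := INR kbar * h).
  assert (HD : 0 < D) by (unfold D; apply Rmult_lt_0_compat; auto; apply lt_0_INR; lia).
  set (c := D * dmax n a).
  set (Mm := fun m => mscal (- D) (Lmode n scen a m)).
  set (Nm := fun m i j => Mm m i j + c * mid i j).
  assert (HMN : forall m i j, Mm m i j = Nm m i j + (- c) * mid i j) by (intros; unfold Nm; ring).
  assert (Hoff : forall m i j, i <> j -> Nm m i j = D * Amode scen a m i j).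
  { intros m i j Hij. unfold Nm, Mm, mscal. rewrite Lmode_entry, !mid_neq by auto. ring. }
  assert (HNn : forall m, nonneg n (Nm m)).
  { intros m i j Hi Hj. destruct (Nat.eq_dec i j).
    - subst. unfold Nm, Mm, mscal. rewrite Lmode_entry, mid_eq, Amode_diag by auto.
      pose proof (rowA_bounds n scen a m j Hj). unfold c. nra.
    - rewrite Hoff by auto. pose proof (Amode_bounds scen a m i j). nra. }
  assert (HMr : forall m, rows n (Mm m) 0).
  { intros m i Hi. unfold Mm, mscal. rewrite rsum_scal. fold (Lmode n scen a m i). rewrite Lmode_rows; auto. ring. }
  assert (HNr : forall m, rows n (Nm m) c).
  { intros m i Hi. unfold Nm. rewrite rsum_plus, rsum_scal. fold (Mm m i). rewrite HMr, mid_rows; auto. ring. }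
  assert (HEm : forall m, (1 <= m <= 4)%nat -> is_mexp n (Mm m) (E m)) by (intros; apply HE; auto).
  assert (HL : forall m, (1 <= m <= 4)%nat -> forall i j, (i<n)%nat -> (j<n)%nat ->
      0 <= E m i j /\ exp (- c) * (mid i j + Nm m i j) <= E m i j).
  { intros m Hm i j Hi Hj. apply (exp_lower n (Mm m) (Nm m) (E m) c); auto; try lia. }
  apply combine with a; auto; try lra; try lia.
  - exact (conj Hsym Hirr).
  - intros m Hm. split; [|split].
    + intros i j Hi Hj. apply (HL m Hm i j Hi Hj).
    + apply (exp_rows n (Mm m)); auto.
    + intros i Hi. destruct (HL m Hm i i Hi Hi) as [_ H2]. rewrite mid_eq in H2.
      pose proof (HNn m i i Hi Hi). pose proof (exp_pos (- c)). nra.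
  - intros i j Hi Hj Hij. destruct (HL 4%nat ltac:(lia) i j Hi Hj) as [_ H2].
    assert (i <> j) by (intro; subst; rewrite Hirr in Hij; auto; discriminate).
    rewrite Hoff, mid_neq, Amode4 in H2 by auto. unfold aR in H2. rewrite Hij in H2.
    pose proof (exp_pos (- c)). nra.
Qed.

Theorem theorem1
  (n : nat) (a : nat -> nat -> bool) (scen : bool)
  (al be ga th h : R) (kbar : nat) :
  (3 <= n)%nat ->
  sym_irrefl n a ->
  connected n a ->
  0 < al < 1 -> 0 < be < 1 -> 0 < ga < 1 -> 0 < th < 1 ->
  al + be + ga + th = 1 ->
  (1 <= kbar)%nat ->
  0 < h -> h < 1 / dmax n a ->
  strongly_connected n
    (fun i j => 0 < expected_adj scen a al be ga th j i) ->
  (* (i) sampled system x(t_{k+1}) = (I - h L_sigma_k)^kbar x(t_k) *)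
  consensus_in_mean n
    (fun m => mpow n (madd mid (mscal (- h) (Lmode n scen a m))) kbar)
    (prob al be ga th)
  /\
  (* (ii) limiting system x(t_{k+1}) = e^{-L_sigma_k Delta} x(t_k), Delta = kbar h *)
  (forall E : nat -> Mat,
     (forall m, (1 <= m <= 4)%nat ->
        is_mexp n (mscal (- (INR kbar * h)) (Lmode n scen a m)) (E m)) ->
     consensus_in_mean n E (prob al be ga th)).
Proof.
  intros. split.
  - apply part_i; auto.
  - apply part_ii; auto.
Qed.
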